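(* For every integer $n\ge1$, the following identity of rational functions holds: \[ R_n(z)=(-1)^n\frac{(n!)^2}{((2n)!)^2}\cdot\frac{z^{2n}}{(z-1)^{2n+2}}\cdot\frac{1}{Q_n(w)\,Q_n(-w)},\qquad w=\frac{z}{z-1}. \]
   Context: For $n\ge1$ let $y_n(z)=\sum_{k=0}^{n}\frac{(n+k)!}{(n-k)!\,k!}\left(\frac{z}{2}\right)^k$ be the $n$-th Bessel polynomial and let $\alpha_{n1},\dots,\alpha_{nn}$ be its zeros (they are simple). Put $a_{nk}=1-\alpha_{nk}/2$ and $b_{nk}=1+\alpha_{nk}/2$ for $k=1,\dots,n$. Define \[ R_n(z)=\frac{1}{(z-1)^2}-\sum_{k=1}^n\frac{a_{nk}}{1-a_{nk}z}+\sum_{k=1}^n\frac{b_{nk}}{1-b_{nk}z}, \] and the polynomial $Q_n(z)=\frac{n!}{(2n)!}\sum_{k=0}^{n}\frac{(2n-k)!}{(n-k)!}\frac{z^k}{k!}$ (so $Q_n(0)=1$). *)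

(* Defs.v *)
From HB Require Import structures.
From mathcomp Require Import all_boot all_order all_algebra.
Set Implicit Arguments. Unset Strict Implicit. Unset Printing Implicit Defensive.
Import Order.TTheory GRing.Theory Num.Theory.
Local Open Scope ring_scope.

Definition bessel_poly (C : numClosedFieldType) (n : nat) : {poly C} :=
  \poly_(k < n.+1)
    (((n + k)`!)%:R / (((n - k)`!)%:R * (k`!)%:R) * (2 ^+ k)^-1).

Definition Qpoly (C : numClosedFieldType) (n : nat) : {poly C} :=
  \poly_(k < n.+1)
    ((n`!)%:R / (((2 * n)%N)`!)%:R
       * (((2 * n - k)%N)`!)%:R / (((n - k)`!)%:R * (k`!)%:R)).

(* R_n(z), where s lists the zeros alpha_{n1},...,alpha_{nn} of y_n,
   a = 1 - alpha/2, b = 1 + alpha/2. *)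
Definition Rfun (C : numClosedFieldType) (s : seq C) (z : C) : C :=
  1 / (z - 1) ^+ 2
  - \sum_(al <- s) (1 - al / 2) / (1 - (1 - al / 2) * z)
  + \sum_(al <- s) (1 + al / 2) / (1 - (1 + al / 2) * z).

(* Main.v *)
Require Import Defs.
From HB Require Import structures.
From mathcomp Require Import all_boot all_order all_algebra all_field.
From mathcomp Require Import ring zify.
Import Order.TTheory GRing.Theory Num.Theory.
Local Open Scope ring_scope.


Definition qc (C : numClosedFieldType) n k : C :=
  (n`!)%:R / (((2 * n)%N)`!)%:R
       * (((2 * n - k)%N)`!)%:R / (((n - k)`!)%:R * (k`!)%:R).

Lemma coefQ (C : numClosedFieldType) n k :
  (Qpoly C n)`_k = if (k < n.+1)%N then qc C n k else 0.
Proof. by rewrite /Qpoly coef_poly. Qed.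

Lemma natr_neq0 (C : numClosedFieldType) m : (0 < m)%N -> (m%:R : C) != 0.
Proof. by move=> h; rewrite pnatr_eq0 -lt0n. Qed.

Lemma fact_neq0 (C : numClosedFieldType) m : ((m`!)%:R : C) != 0.
Proof. by rewrite natr_neq0 // fact_gt0. Qed.

Lemma qc_rec (C : numClosedFieldType) n k : (k < n)%N ->
  qc C n k.+1 = (n%:R - k%:R) / (k.+1%:R * ((2 * n)%N%:R - k%:R)) * qc C n k.
Proof.
move=> kn; rewrite /qc.
have e1 : (2 * n - k = (2 * n - k.+1).+1)%N by lia.
have e2 : (n - k = (n - k.+1).+1)%N by lia.
rewrite e1 e2 !factS.
have e3 : (n%:R - k%:R : C) = (n - k.+1).+1%:R by rewrite -e2 natrB // ltnW.
have e4 : ((2 * n)%N%:R - k%:R : C) = (2 * n - k.+1).+1%:R by rewrite -e1 natrB //; lia.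
rewrite e3 e4 !natrM.
have := fact_neq0 C n; have := fact_neq0 C (2 * n); have := fact_neq0 C (2 * n - k.+1);
have := fact_neq0 C (n - k.+1); have := fact_neq0 C k.
have := @natr_neq0 C _ (ltn0Sn (n - k.+1)); have := @natr_neq0 C _ (ltn0Sn (2 * n - k.+1));
have := @natr_neq0 C _ (ltn0Sn k).
move=> *; field.
by rewrite !nat1r; repeat (apply/andP; split).
Qed.

Definition Qm (C : numClosedFieldType) n : {poly C} :=
  \poly_(k < n.+1) ((-1) ^+ k * (Qpoly C n)`_k).

Lemma coefQ_big (C : numClosedFieldType) n k : (n < k)%N -> (Qpoly C n)`_k = 0.
Proof. by move=> h; rewrite coefQ ltnNge h. Qed.

Lemma coefQm (C : numClosedFieldType) n k : (Qm C n)`_k = (-1) ^+ k * (Qpoly C n)`_k.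
Proof.
rewrite /Qm coef_poly; case: ifP => // /negbT; rewrite -leqNgt => h.
by rewrite coefQ_big ?mulr0.
Qed.

Lemma ode_coef0 (C : numClosedFieldType) n m :
  (Qpoly C n)`_(m.+1) * m.+1%:R * m%:R - (Qpoly C n)`_m * m%:R - (2 * n)%N%:R * ((Qpoly C n)`_(m.+1) * m.+1%:R)
   + n%:R * (Qpoly C n)`_m = 0.
Proof.
case: (ltnP m n) => h.
  rewrite !coefQ !ltnS (ltnW h) h qc_rec //.
  have e : ((2 * n)%N%:R - m%:R : C) = (2 * n - m)%N%:R by rewrite natrB //; lia.
  have e1 : ((2 * n)%N%:R - m%:R : C) != 0 by rewrite e natr_neq0 //; lia.
  have e2 : (m.+1%:R : C) != 0 by rewrite natr_neq0.
  field; rewrite nat1r -natrM; by apply/andP.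
rewrite coefQ_big ?ltnS //.
case: (ltngtP m n) => [|hm|->]; first by lia.
  by rewrite coefQ_big //; ring.
ring.
Qed.

Ltac lin_use h c :=
  apply/eqP; rewrite -subr_eq0; apply/eqP;
  match type of h with ?E = 0 => transitivity (c * E); [ring | by rewrite h mulr0] end.

Lemma Q_ode (C : numClosedFieldType) n :
  'X * (Qpoly C n)^`()^`() = 'X * (Qpoly C n)^`() + (2 * n)%N%:R *: (Qpoly C n)^`() - n%:R *: Qpoly C n.
Proof.
apply/polyP => k; rewrite coefB coefD !coefZ !coefXM !coef_deriv.
case: k => [|m] /=.
  have h := ode_coef0 C n 0; lin_use h (1 : C).
rewrite ?coef_deriv; have h := ode_coef0 C n m.+1; lin_use h (1 : C).
Qed.

Lemma Qm_ode (C : numClosedFieldType) n :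
  'X * (Qm C n)^`()^`() = (2 * n)%N%:R *: (Qm C n)^`() - 'X * (Qm C n)^`() + n%:R *: Qm C n.
Proof.
apply/polyP => k; rewrite coefD coefB !coefZ !coefXM !coef_deriv !coefQm.
case: k => [|m] /=.
  have h := ode_coef0 C n 0; rewrite !exprS !expr0; lin_use h (-1 : C).
rewrite ?coef_deriv ?coefQm; have h := ode_coef0 C n m.+1; rewrite !exprS.
lin_use h ((-1) ^+ m : C).
Qed.

Definition Fp (C : numClosedFieldType) n : {poly C} :=
  Qpoly C n * Qm C n - (Qpoly C n)^`() * Qm C n + Qpoly C n * (Qm C n)^`().

Lemma F_ode (C : numClosedFieldType) n :
  'X * (Fp C n)^`() = (2 * n)%N%:R%:P * Fp C n.
Proof.
have hA := Q_ode C n; have hB := Qm_ode C n.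
rewrite -!mul_polyC in hA hB.
rewrite /Fp !derivD !derivN !derivM.
move: hA hB.
set A := Qpoly C n; set B := Qm C n; set A1 := A^`(); set B1 := B^`().
set A2 := A1^`(); set B2 := B1^`().
set c := (2 * n)%N%:R%:P; set d := n%:R%:P => hA hB.
apply/eqP; rewrite -subr_eq0; apply/eqP.
transitivity (- B * ('X * A2 - ('X * A1 + c * A1 - d * A)) + A * ('X * B2 - (c * B1 - 'X * B1 + d * B))).
  ring.
by rewrite hA hB !subrr !mulr0 addr0.
Qed.

Lemma F_mono (C : numClosedFieldType) n :
  Fp C n = ((Fp C n)`_(2 * n)%N)%:P * 'X^(2 * n)%N.
Proof.
apply/polyP => k; rewrite coefCM coefXn.
have := congr1 (fun p : {poly C} => p`_k) (F_ode C n); rewrite /= coefXM coefCM coef_deriv.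
have [->|hk] := eqVneq k (2 * n)%N; first by move=> _; rewrite /= mulr1n mulr1.
rewrite /= mulr0n mulr0; case: k hk => [|k] hk /= h.
  apply/eqP; move/eqP: h; rewrite eq_sym mulf_eq0 pnatr_eq0 => /orP[/eqP h|] //.
  by rewrite h in hk.
have : (Fp C n)`_k.+1 * (k.+1%:R - (2 * n)%N%:R) = 0.
  by rewrite mulrBr mulr_natr h mulrC subrr.
move/eqP; rewrite mulf_eq0 subr_eq0 eqr_nat => /orP[/eqP //|/eqP h2].
by rewrite h2 eqxx in hk.
Qed.

Lemma qc_n (C : numClosedFieldType) n : qc C n n = (n`!)%:R / (((2 * n)%N)`!)%:R.
Proof.
rewrite /qc subnn (_ : (2 * n - n = n)%N); last by lia.
have := fact_neq0 C n; have := fact_neq0 C (2 * n) => *.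
rewrite fact0 mul1r; field; by apply/andP.
Qed.

Lemma size_Q (C : numClosedFieldType) n : size (Qpoly C n) = n.+1.
Proof.
rewrite /Qpoly size_poly_eq // -/(qc C n n) qc_n.
by rewrite mulf_neq0 ?invr_eq0 ?fact_neq0.
Qed.

Lemma size_Qm (C : numClosedFieldType) n : size (Qm C n) = n.+1.
Proof.
rewrite /Qm size_poly_eq // coefQ ltnSn qc_n.
by rewrite !mulf_neq0 ?invr_eq0 ?fact_neq0 // expf_neq0 // oppr_eq0 oner_eq0.
Qed.

Lemma F_top (C : numClosedFieldType) n :
  (Fp C n)`_(2 * n)%N = (-1) ^+ n * ((n`!)%:R ^+ 2 / (((2 * n)%N)`!)%:R ^+ 2).
Proof.
have QN : Qpoly C n != 0 by rewrite -size_poly_eq0 size_Q.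
have QmN : Qm C n != 0 by rewrite -size_poly_eq0 size_Qm.
have sQ' : (size (Qpoly C n)^`() <= n)%N.
  by have := lt_size_deriv QN; rewrite size_Q.
have sQm' : (size (Qm C n)^`() <= n)%N.
  by have := lt_size_deriv QmN; rewrite size_Qm.
rewrite /Fp coefD coefB.
rewrite [X in _ - X + _]nth_default; last first.
  apply: leq_trans (size_mul_leq _ _) _; rewrite size_Qm addnS /= mul2n -addnn leq_add2r; exact: sQ'.
rewrite [X in _ - _ + X]nth_default; last first.
  apply: leq_trans (size_mul_leq _ _) _; rewrite size_Q addSn /= mul2n -addnn leq_add2l; exact: sQm'.
have e : (2 * n)%N = (size (Qpoly C n * Qm C n)).-1.
  by rewrite size_mul // size_Q size_Qm; lia.
rewrite {1}e.
rewrite -lead_coefE lead_coefM !lead_coefE size_Q size_Qm /= coefQm coefQ ltnSn qc_n.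
have := fact_neq0 C (2 * n) => h2.
rewrite subr0 addr0; field; done.
Qed.


Lemma horner_alt (C : numClosedFieldType) (p q : {poly C}) x :
  (forall k, q`_k = (-1) ^+ k * p`_k) -> q.[x] = p.[- x].
Proof.
move=> h.
rewrite (@horner_coef_wide _ (maxn (size p) (size q)) q) ?leq_maxr //.
rewrite (@horner_coef_wide _ (maxn (size p) (size q)) p) ?leq_maxl //.
by apply: eq_bigr => i _; rewrite h (exprNn x); ring.
Qed.

Lemma Qm_eval (C : numClosedFieldType) n x : (Qm C n).[x] = (Qpoly C n).[- x].
Proof. by apply: horner_alt => k; rewrite coefQm. Qed.

Lemma Qm'_eval (C : numClosedFieldType) n x :
  (Qm C n)^`().[x] = - (Qpoly C n)^`().[- x].
Proof.
rewrite -(@horner_alt _ _ (- (Qm C n)^`())) ?hornerN ?opprK //.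
by move=> k; rewrite coefN !coef_deriv coefQm exprS; ring.
Qed.

Lemma Q_at0 (C : numClosedFieldType) n : (Qpoly C n).[0] = 1.
Proof.
rewrite horner_coef0 coefQ /= /qc !subn0 fact0.
have := fact_neq0 C n; have := fact_neq0 C (2 * n) => *; field; by apply/andP.
Qed.

Lemma Q_bessel (C : numClosedFieldType) n x : x != 0 ->
  (Qpoly C n).[x] = (n`!)%:R / (((2 * n)%N)`!)%:R * x ^+ n * (bessel_poly C n).[2 / x].
Proof.
move=> x0; rewrite /Qpoly /bessel_poly !horner_poly (reindex_inj rev_ord_inj) /=.
rewrite mulr_sumr; apply: eq_bigr => [[i hi]] _ /=.
rewrite subSS.
have hi' : (i <= n)%N by rewrite -ltnS.
have e1 : (2 * n - (n - i) = n + i)%N by lia.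
have e2 : (n - (n - i) = i)%N by lia.
rewrite e1 e2.
have ex : x ^+ n = x ^+ (n - i) * x ^+ i by rewrite -exprD subnK.
rewrite ex expr_div_n.
have h2 : (2 : C) != 0 by rewrite pnatr_eq0.
have := fact_neq0 C n; have := fact_neq0 C (2 * n); have := fact_neq0 C (n - i);
have := fact_neq0 C i => *.
have : x ^+ i != 0 by rewrite expf_neq0.
have : (2 : C) ^+ i != 0 by rewrite expf_neq0.
move=> *; field.
by apply/and5P.
Qed.


Lemma logder (C : numClosedFieldType) (r : seq C) w : w \notin r ->
  (\prod_(a <- r) ('X - a%:P))^`().[w] =
  (\prod_(a <- r) ('X - a%:P)).[w] * \sum_(a <- r) (w - a)^-1.
Proof.
elim: r => [|a r IH]; first by rewrite !big_nil derivC !hornerC mulr0.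
rewrite inE negb_or => /andP[wa wr].
rewrite !big_cons derivM derivXsubC mul1r hornerD !hornerM IH // !hornerXsubC.
have : w - a != 0 by rewrite subr_eq0.
by move=> h; field.
Qed.

Lemma term_id (C : numClosedFieldType) (r z : C) :
  r != 0 -> z != 1 ->
  1 - (1 - (2 / r) / 2) * z != 0 -> 1 - (1 + (2 / r) / 2) * z != 0 ->
  z / (z - 1) - r != 0 -> - (z / (z - 1)) - r != 0 ->
  (1 + (2 / r) / 2) / (1 - (1 + (2 / r) / 2) * z)
  - (1 - (2 / r) / 2) / (1 - (1 - (2 / r) / 2) * z)
  = - (1 / (z - 1) ^+ 2) * ((z / (z - 1) - r)^-1 + (- (z / (z - 1)) - r)^-1).
Proof.
move=> r0 z1 h1 h2 h3 h4.
have z1' : z - 1 != 0 by rewrite subr_eq0.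
have two : (2 : C) != 0 by rewrite pnatr_eq0.
have e3 : z + - r * (z - 1) = (z / (z - 1) - r) * (z - 1) by field.
have e4 : - z + - r * (z - 1) = (- (z / (z - 1)) - r) * (z - 1) by field.
field; apply/and4P; split => //; [rewrite e4 | rewrite e3]; exact: mulf_neq0.
Qed.


Lemma bessel0 (C : numClosedFieldType) n : (bessel_poly C n).[0] = 1.
Proof.
rewrite horner_coef0 /bessel_poly coef_poly /= addn0 subn0 fact0 expr0 invr1 mulr1.
have := fact_neq0 C n => *; field; done.
Qed.

Lemma Fev (C : numClosedFieldType) n x :
  (Qpoly C n).[x] * (Qpoly C n).[- x] - (Qpoly C n)^`().[x] * (Qpoly C n).[- x]
  - (Qpoly C n).[x] * (Qpoly C n)^`().[- x] =
  (-1) ^+ n * ((n`!)%:R ^+ 2 / (((2 * n)%N)`!)%:R ^+ 2) * x ^+ (2 * n).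
Proof.
have := congr1 (fun p => p.[x]) (F_mono C n).
rewrite F_top /Fp /= hornerM hornerC hornerXn !hornerD hornerN !hornerM Qm_eval Qm'_eval.
move=> h; rewrite -[RHS]h; ring.
Qed.

Theorem mainTheorem7 (C : numClosedFieldType) (n : nat) (s : seq C) (z : C) :
  (1 <= n)%N ->
  uniq s ->
  (forall x : C, root (bessel_poly C n) x = (x \in s)) ->
  z != 1 ->
  (forall al, al \in s -> 1 - (1 - al / 2) * z != 0) ->
  (forall al, al \in s -> 1 - (1 + al / 2) * z != 0) ->
  let w := z / (z - 1) in
  (Qpoly C n).[w] * (Qpoly C n).[- w] != 0 ->
  Rfun s z =
    (-1) ^+ n * ((n`!)%:R ^+ 2 / (((2 * n)%N)`!)%:R ^+ 2)
    * (z ^+ (2 * n) / (z - 1) ^+ (2 * n + 2))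
    * (1 / ((Qpoly C n).[w] * (Qpoly C n).[- w])).
Proof.
move=> n1 us hroot z1 hA hB w hQ.
have Fe := Fev C n.
set Q := Qpoly C n in hQ Fe *.
set L := (-1) ^+ n * _ in Fe *.
have two : (2 : C) != 0 by rewrite pnatr_eq0.
have LN : L != 0.
  by rewrite /L mulf_neq0 ?expf_neq0 ?oppr_eq0 ?oner_eq0 // mulf_neq0 ?invr_eq0 ?expf_neq0 ?fact_neq0.
have [QwN QmwN] : Q.[w] != 0 /\ Q.[- w] != 0.
  by move: hQ; rewrite mulf_eq0 negb_or => /andP.
have Q0 : Q.[0] = 1 by exact: Q_at0.
have QN : Q != 0.
  by apply/eqP => h; move: Q0; rewrite h horner0 => /eqP; rewrite eq_sym oner_eq0.
have root0 : forall x, root Q x -> x != 0.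
  by move=> x; apply: contraTneq => ->; rewrite /root Q0 oner_eq0.
have rootQ' : forall x, root Q x -> ~~ root Q^`() x.
  move=> x hx; apply/negP => hx'; move: (Fe x).
  rewrite (rootP hx) (rootP hx') !(mul0r, mulr0, subr0) => /esym/eqP.
  rewrite mulf_eq0 (negbTE LN) /= expf_eq0 (negbTE (root0 x hx)) andbF //.
have [rho Drho] := closed_field_poly_normal Q.
have cN : lead_coef Q != 0 by rewrite lead_coef_eq0.
have memrho : forall x, (x \in rho) = root Q x.
  by move=> x; rewrite Drho rootZ // root_prod_XsubC.
have urho : uniq rho.
  rewrite -separable_prod_XsubC -(eqp_separable (eqp_scale _ cN)) -Drho.
  rewrite unlock coprimep_def; apply/negPn/negP => /closed_rootP [x].
  by rewrite root_gcd => /andP[h1 h2]; move: (rootQ' x h1); rewrite h2.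
have y0 : forall a, a \in s -> a != 0.
  move=> a; rewrite -hroot; apply: contraTneq => ->.
  by rewrite /root bessel0 oner_eq0.
have perm : perm_eq (map (fun a => 2 / a) s) rho.
  apply: uniq_perm => //.
    rewrite map_inj_in_uniq // => a b ha hb /= e.
    by move: e => /(mulfI two)/invr_inj.
  move=> x; rewrite memrho; apply/mapP/idP.
    case=> a ha ->; rewrite /root /Q Q_bessel; last by rewrite mulf_neq0 // invr_eq0; apply: y0.
    rewrite (_ : 2 / (2 / a) = a); last by have := y0 a ha => ?; field.
    by move: ha; rewrite -hroot => /rootP ->; rewrite mulr0.
  move=> hx; have x0 := root0 x hx; exists (2 / x); last by field.
  rewrite -hroot; move: hx; rewrite /root /Q Q_bessel // !mulf_eq0.
  by rewrite invr_eq0 (negbTE (fact_neq0 C n)) (negbTE (fact_neq0 C (2 * n))) expf_eq0 (negbTE x0) andbF.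
have sumconv : forall g : C -> C, \sum_(a <- s) g a = \sum_(r <- rho) g (2 / r).
  move=> g; rewrite -(perm_big _ perm) big_map; apply: eq_big_seq => a ha.
  by congr g; have := y0 a ha => ?; field.
have ins : forall r, r \in rho -> 2 / r \in s.
  move=> r; rewrite -(perm_mem perm) => /mapP [a ha ->].
  by rewrite (_ : 2 / (2 / a) = a) //; have := y0 a ha => ?; field.
have ld : forall x, ~~ root Q x -> Q^`().[x] = Q.[x] * \sum_(r <- rho) (x - r)^-1.
  move=> x hx; rewrite [in LHS]Drho [in RHS]Drho derivZ !hornerZ logder ?mulrA //.
  by rewrite memrho.
have z1' : z - 1 != 0 by rewrite subr_eq0.
rewrite /Rfun !sumconv -addrA [X in _ + X]addrC -sumrB.
rewrite (eq_big_seq (fun r => - (1 / (z - 1) ^+ 2) * ((w - r)^-1 + (- w - r)^-1))); last first.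
  move=> r hr; have hr' := hr; rewrite memrho in hr'.
  apply: term_id.
  - exact: root0.
  - exact: z1.
  - exact: hA _ (ins r hr).
  - exact: hB _ (ins r hr).
  - by rewrite subr_eq0; apply: contraNneq QwN => e; rewrite /w e.
  - by rewrite subr_eq0; apply: contraNneq QmwN => e; rewrite /w e.
rewrite -mulr_sumr big_split /=.
have S1 : \sum_(r <- rho) (w - r)^-1 = Q^`().[w] / Q.[w].
  by rewrite ld // mulrAC mulfV // mul1r.
have S2 : \sum_(r <- rho) (- w - r)^-1 = Q^`().[- w] / Q.[- w].
  by rewrite ld // mulrAC mulfV // mul1r.
rewrite S1 S2.
have key : 1 / (z - 1) ^+ 2 + - (1 / (z - 1) ^+ 2) * (Q^`().[w] / Q.[w] + Q^`().[- w] / Q.[- w])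
   = 1 / (z - 1) ^+ 2 * (L * w ^+ (2 * n)) / (Q.[w] * Q.[- w]).
  by rewrite -Fe; field; rewrite QwN QmwN z1'.
rewrite key /w expr_div_n exprD; field.
by apply/and4P; split => //; rewrite expf_neq0.
Qed.
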